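(* Let $U\subseteq\mathbb{F}^n$ be an open compact set and $f:U\to\mathbb{F}$ a function such that for all $x_0,x_0+x\in U$, $$f(x_0+x)=f(x_0)+f'(x_0)\cdot x+R(x_0,x)(x)\cdot x,$$ where $f'(x_0)\in\mathbb{F}^n$ and $R(x_0,x):\mathbb{F}^n\to\mathbb{F}^n$ is linear, with $$B:=\sup_{x_0,\,x_0+x\in U,\ |y|=1}|R(x_0,x)(y)\cdot y|<\infty,\qquad \delta:=\min_{x_0\in U}|f'(x_0)|>0.$$ Let $\phi\in\mathcal S(U)$ and let $m_0\in\mathbb Z$ be the smallest integer $m$ such that $U$ is a finite disjoint union of balls $x_k+B_{q^{-m}}$ on each of which $\phi$ is constant. Then $$\int_U\chi(\lambda f(x))\phi(x)\,dx=0\qquad\text{for all }\lambda\in\mathbb{F}^\times\text{ with }|\lambda|>\max\{q\delta^{-2}B,\ \delta^{-1}q^{m_0}\}.$$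
   Context: $\mathbb{F}$ is a non-archimedean local field with ring of integers $\mathfrak o_{\mathbb{F}}$, residue field of cardinality $q$, normalized absolute value $|\cdot|$ (so the uniformizer has absolute value $q^{-1}$); on $\mathbb{F}^n$, $|x|=\max_i|x_i|$ and $x\cdot y=\sum_jx_jy_j$; $B_r=\{x\in\mathbb{F}^n:|x|\le r\}$. $\chi$ is a character of $(\mathbb{F},+)$ with kernel $\mathfrak o_{\mathbb{F}}$; $dx$ is a Haar measure on $\mathbb{F}^n$; $\mathcal S(U)$ is the space of locally constant compactly supported functions on $U$. *)

(* Defs.v *)
From HB Require Import structures.
From mathcomp Require Import all_boot all_order all_algebra.
From mathcomp Require Import boolp classical_sets reals.
From mathcomp Require Import complex.
From Stdlib Require Lists.List.
Set Implicit Arguments. Unset Strict Implicit. Unset Printing Implicit Defensive.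
Import Order.TTheory GRing.Theory Num.Theory.
Local Open Scope ring_scope.
Local Open Scope classical_set_scope.

Section LocalField.
Variables (R : realType) (F : fieldType) (absF : F -> R) (q : nat).

(* (F, absF) is a non-archimedean local field whose residue field has q
   elements, and absF is the normalized absolute value (|pi| = q^-1). *)
Definition nonarch_local_field : Prop :=
  (1 < q)%N /\
      (forall x : F, absF x = 0 <-> x = 0) /\
      (forall x y : F, absF (x * y) = absF x * absF y) /\
      (forall x y : F, absF (x + y) <= Num.max (absF x) (absF y)) /\
      (forall x : F, x != 0 -> exists k : int, absF x = (q%:R : R) ^ k) /\
      (exists pi : F, absF pi = (q%:R : R)^-1) /\
      (* residue field o_F / p_F has exactly q elements *)
      (exists reps : 'I_q -> F, (forall i, absF (reps i) <= 1) /\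
         forall x, absF x <= 1 -> exists! i, absF (x - reps i) < 1) /\
      (forall u : nat -> F,
         (forall e : R, 0 < e -> exists N, forall m k, (N <= m)%N -> (N <= k)%N ->
             absF (u m - u k) < e) ->
         exists l, forall e : R, 0 < e -> exists N, forall m, (N <= m)%N ->
             absF (u m - l) < e).

Variable n : nat.
Notation V := 'rV[F]_n.

Definition normv (x : V) : R := \big[Num.max/0]_(i < n) absF (x ord0 i).
Definition dotv (x y : V) : F := \sum_(j < n) x ord0 j * y ord0 j.

Definition openV (O : set V) : Prop :=
  forall x, O x -> exists r : R, 0 < r /\ forall y, normv (y - x) < r -> O y.

Definition compactV (K : set V) : Prop :=
  forall (I : Type) (O : I -> set V), (forall i, openV (O i)) ->
    K `<=` (fun x => exists i, O i x) ->
    exists s : seq I, K `<=` (fun x => exists2 i, Stdlib.Lists.List.In i s & O i x).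

Definition loc_const_on (D : set V) (C : Type) (g : V -> C) : Prop :=
  forall x, D x -> exists r : R, 0 < r /\
    forall y, normv (y - x) < r -> D y /\ g y = g x.

Definition schwartz_on (D : set V) (C : zmodType) (g : V -> C) : Prop :=
  loc_const_on D g /\
  exists K : set V, K `<=` D /\ compactV K /\ forall x, D x -> ~ K x -> g x = 0.

Definition ball_decomp (U : set V) (C : Type) (phi : V -> C) (m : int) : Prop :=
  exists s : seq V,
    (forall x, U x <-> exists2 c, c \in s & normv (x - c) <= (q%:R : R) ^ (- m)) /\
    (forall i j, (i < size s)%N -> (j < size s)%N -> i <> j ->
       forall x, ~ (normv (x - nth 0 s i) <= (q%:R : R) ^ (- m) /\
                    normv (x - nth 0 s j) <= (q%:R : R) ^ (- m))) /\
    (forall c, c \in s -> forall x y,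
       normv (x - c) <= (q%:R : R) ^ (- m) -> normv (y - c) <= (q%:R : R) ^ (- m) ->
       phi x = phi y).

Definition char_ker_oF (chi : F -> R[i]) : Prop :=
  (forall x y, chi (x + y) = chi x * chi y) /\
  (forall x, `|chi x| = 1) /\
  (forall x, chi x = 1 <-> absF x <= 1).

(* I is the integral against a Haar measure dx on F^n, viewed as a
   functional on S(F^n): linear, translation invariant, positive, nonzero. *)
Definition haar_integral (I : (V -> R[i]) -> R[i]) : Prop :=
  [/\ (forall g h (a : R[i]), schwartz_on setT g -> schwartz_on setT h ->
         I (fun x => g x + a * h x) = I g + a * I h),
      (forall g (a : V), schwartz_on setT g -> I (fun x => g (x + a)) = I g),
      (forall g, schwartz_on setT g -> (forall x, 0 <= g x) -> 0 <= I g) &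
      (exists g, schwartz_on setT g /\ I g != 0)].

End LocalField.

(* Main.v *)
Require Import Defs.
From HB Require Import structures.
From mathcomp Require Import all_boot all_order all_algebra.
From mathcomp Require Import boolp classical_sets reals.
From mathcomp Require Import complex.
From mathcomp Require Import ring.
Import Order.TTheory GRing.Theory Num.Theory.
Local Open Scope ring_scope.
Local Open Scope classical_set_scope.
Set Implicit Arguments. Unset Strict Implicit.
Section Basic.
Variables (R : realType) (F : fieldType) (absF : F -> R) (q : nat).
Hypothesis hF : nonarch_local_field absF q.

Lemma q_gt1 : 1 < (q%:R : R).
Proof. by case: hF => h _; rewrite ltr1n. Qed.
Lemma q_gt0 : 0 < (q%:R : R).
Proof. exact: lt_trans ltr01 q_gt1. Qed.

Lemma absF0 : absF 0 = 0.
Proof. by case: hF => _ [h _]; apply h. Qed.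
Lemma absF_eq0 x : absF x = 0 -> x = 0.
Proof. by case: hF => _ [h _]; apply h. Qed.
Lemma absFM x y : absF (x * y) = absF x * absF y.
Proof. by case: hF => _ [_ [h _]]. Qed.
Lemma absF_ultra x y : absF (x + y) <= Num.max (absF x) (absF y).
Proof. by case: hF => _ [_ [_ [h _]]]. Qed.
Lemma absF_val x : x != 0 -> exists k : int, absF x = (q%:R : R) ^ k.
Proof. by case: hF => _ [_ [_ [_ [h _]]]]; apply: h. Qed.

Lemma absF_ge0 x : 0 <= absF x.
Proof.
have [->|nz] := eqVneq x 0; first by rewrite absF0.
have [k ->] := absF_val nz; exact/ltW/exprz_gt0/q_gt0.
Qed.

Lemma absF_gt0 x : x != 0 -> 0 < absF x.
Proof.
move=> nz; rewrite lt_def absF_ge0 andbT; apply/eqP => /absF_eq0 h.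
by rewrite h eqxx in nz.
Qed.

Lemma absF1 : absF 1 = 1.
Proof.
have h := absFM 1 1; rewrite mulr1 in h.
have nz : absF 1 != 0 by apply/eqP => /absF_eq0 /eqP; rewrite oner_eq0.
by apply: (mulfI nz); rewrite mulr1 -h.
Qed.

Lemma absFN x : absF (- x) = absF x.
Proof.
have h1 : absF (-1) = 1.
  apply/eqP; rewrite -sqrp_eq1 ?absF_ge0 //.
  by rewrite expr2 -absFM mulrNN mulr1 absF1.
by rewrite -mulN1r absFM h1 mul1r.
Qed.

Lemma absFB x y : absF (x - y) = absF (y - x).
Proof. by rewrite -absFN opprB. Qed.

Lemma absFV x : absF (x^-1) = (absF x)^-1.
Proof.
have [->|nz] := eqVneq x 0; first by rewrite invr0 absF0 invr0.
have h := absFM x x^-1; rewrite divff // absF1 in h.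
have nz' : absF x != 0 by rewrite gt_eqF ?absF_gt0.
by apply: (mulfI nz'); rewrite -h divff.
Qed.

Lemma qexp_lt a b : (q%:R : R) ^ a < (q%:R : R) ^ b -> (q%:R : R) ^ a * q%:R <= (q%:R : R) ^ b.
Proof.
rewrite ltr_eXz2l ?q_gt1 // => ab.
rewrite -[X in _ * X]expr1z -expfzDr ?gt_eqF ?q_gt0 //.
by rewrite ler_eXz2l ?q_gt1 // lezD1.
Qed.

Lemma absF_disc x (k : int) : (q%:R : R) ^ k < absF x -> (q%:R : R) ^ k * q%:R <= absF x.
Proof.
have [->|nz] := eqVneq x 0.
  by rewrite absF0 => h; exfalso; move: h; rewrite ltNge ltW // exprz_gt0 ?q_gt0.
by have [j ->] := absF_val nz; apply: qexp_lt.
Qed.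

Lemma absF_lt_q x : absF x < q%:R -> absF x <= 1.
Proof.
have [->|nz] := eqVneq x 0; first by rewrite absF0 ler01.
have [j ->] := absF_val nz => h.
rewrite -(expr0z (q%:R : R)) ler_eXz2l ?q_gt1 //.
move: h; rewrite -{2}(expr1z (q%:R:R)) ltr_eXz2l ?q_gt1 //.

Qed.

Variable n : nat.
Local Notation V := 'rV[F]_n.
Local Notation nv := (normv absF).

Lemma normv_ge0 (v : V) : 0 <= nv v.
Proof.
rewrite /normv; elim/big_rec: _ => // i x _ h.
by rewrite le_max h orbT.
Qed.

Lemma normv_coord (v : V) j : absF (v ord0 j) <= nv v.
Proof. exact: (le_bigmax 0 (fun i => absF (v ord0 i)) j). Qed.

Lemma normv_le (v : V) b : 0 <= b -> (forall j, absF (v ord0 j) <= b) -> nv v <= b.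
Proof. by move=> b0 h; apply: bigmax_le. Qed.

Lemma normv_attain (v : V) : nv v = 0 \/ exists j, nv v = absF (v ord0 j).
Proof.
rewrite /normv; elim/big_rec: _ => [|i x _ [->|[j ->]]]; first by left.
- by case: (leP (absF (v ord0 i)) 0) => h; [left|right; exists i].
- by case: (leP (absF (v ord0 i)) (absF (v ord0 j))) => h; right; [exists j|exists i].
Qed.

Lemma normv_eq0 (v : V) : nv v = 0 -> v = 0.
Proof.
move=> h; apply/rowP => j; rewrite mxE; apply: absF_eq0.
by apply/le_anti; rewrite absF_ge0 andbT -h normv_coord.
Qed.

Lemma normv0 : nv (0 : V) = 0.
Proof.
apply/le_anti; rewrite normv_ge0 andbT; apply: normv_le => // j.
by rewrite mxE absF0.
Qed.

Lemma normvD (x y : V) : nv (x + y) <= Num.max (nv x) (nv y).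
Proof.
apply: normv_le; first by rewrite le_max normv_ge0.
move=> j; rewrite mxE; apply: le_trans (absF_ultra _ _) _.
by rewrite ge_max !le_max !normv_coord /= orbT.
Qed.

Lemma normvN (x : V) : nv (- x) = nv x.
Proof. by rewrite /normv; apply: eq_bigr => j _; rewrite mxE absFN. Qed.

Lemma normvB (x y : V) : nv (x - y) = nv (y - x).
Proof. by rewrite -normvN opprB. Qed.

Lemma normvZ c (x : V) : nv (c *: x) = absF c * nv x.
Proof.
rewrite /normv; apply: (big_rec2 (fun s t => s = absF c * t)); first by rewrite mulr0.
move=> i a b _ ->; rewrite mxE absFM maxr_pMr //; exact: absF_ge0.
Qed.

Lemma ball_trans (x y z : V) r : nv (x - y) <= r -> nv (y - z) <= r -> nv (x - z) <= r.
Proof.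
move=> h1 h2; have -> : x - z = (x - y) + (y - z) by rewrite addrA subrK.
by apply: le_trans (normvD _ _) _; rewrite ge_max h1 h2.
Qed.

Lemma ball_transl (x y z : V) r : nv (x - y) < r -> nv (y - z) <= r -> nv (x - z) <= r.
Proof. by move=> h1; apply: ball_trans; apply: ltW. Qed.

Lemma dotvDr (a x y : V) : dotv a (x + y) = dotv a x + dotv a y.
Proof. by rewrite /dotv -big_split; apply: eq_bigr => j _; rewrite mxE mulrDr. Qed.

Lemma dotvZr (a x : V) c : dotv a (c *: x) = c * dotv a x.
Proof. by rewrite /dotv mulr_sumr; apply: eq_bigr => j _; rewrite mxE mulrCA. Qed.

Lemma dotvZl (a x : V) c : dotv (c *: a) x = c * dotv a x.
Proof. by rewrite /dotv mulr_sumr; apply: eq_bigr => j _; rewrite mxE mulrA. Qed.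

Lemma dotv0r (a : V) : dotv a 0 = 0.
Proof. by rewrite /dotv big1 // => j _; rewrite mxE mulr0. Qed.

Lemma dotv_delta (a : V) j : dotv a (delta_mx ord0 j) = a ord0 j.
Proof.
rewrite /dotv (bigD1 j) //= big1 ?addr0.
  by rewrite mxE !eqxx mulr1.
by move=> k kj; rewrite mxE eqxx /= (negbTE kj) mulr0.
Qed.

Lemma dotv_le (a b : V) : absF (dotv a b) <= nv a * nv b.
Proof.
rewrite /dotv; apply: (big_rec (fun s => absF s <= nv a * nv b)).
  by rewrite absF0 mulr_ge0 ?normv_ge0.
move=> i s _ h; apply: le_trans (absF_ultra _ _) _; rewrite ge_max h andbT.
by rewrite absFM ler_pM ?absF_ge0 ?normv_coord.
Qed.


Variables (chi : F -> R[i]) (I : ('rV[F]_n -> R[i]) -> R[i]).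
Hypothesis hchi : char_ker_oF absF chi.
Hypothesis hI : haar_integral absF I.
Variables (U : set V) (g : V -> V) (H : V -> R[i]) (lam : F) (r : R).
Hypothesis hUc : compactV absF U.
Hypothesis hr : 0 < r.
Hypothesis hballU : forall c x, U c -> nv (x - c) <= r -> U x.
Hypothesis hloc : forall c x, U c -> nv (x - c) <= r ->
  H x = H c * chi (lam * dotv (g c) (x - c)).
Hypothesis hgrad : forall c, U c -> exists a, nv a <= r /\ 1 < absF (lam * dotv (g c) a).

Lemma chiD x y : chi (x + y) = chi x * chi y.
Proof. by case: hchi. Qed.
Lemma chi_small x : absF x <= 1 -> chi x = 1.
Proof. by case: hchi => _ [_ h] /h. Qed.
Lemma chi_big x : 1 < absF x -> chi x != 1.
Proof. by case: hchi => _ [_ h] hx; apply/eqP => /h; rewrite leNgt hx. Qed.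

Lemma I_lin (u v : V -> R[i]) a : schwartz_on absF setT u -> schwartz_on absF setT v ->
  I (fun x => u x + a * v x) = I u + a * I v.
Proof. by case: hI => h _ _ _; apply: h. Qed.
Lemma I_trans (u : V -> R[i]) a : schwartz_on absF setT u -> I (fun x => u (x + a)) = I u.
Proof. by case: hI => _ h _ _; apply: h. Qed.

Lemma sch0 : schwartz_on absF setT (fun _ : V => 0 : R[i]).
Proof.
split; first by move=> x _; exists 1; split.
exists set0; split => //; split => // J O _ _; by exists [::] => x.
Qed.

Lemma I0 : I (fun _ => 0) = 0.
Proof.
have := I_lin 1 sch0 sch0; rewrite mul1r.
under eq_fun do rewrite addr0.
by move=> h; apply: (addrI (I (fun _ => 0))); rewrite addr0 [RHS]h mul1r.
Qed.

Lemma IZ (u : V -> R[i]) a : schwartz_on absF setT u -> I (fun x => a * u x) = a * I u.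
Proof.
move=> hu; have := I_lin a sch0 hu.
by under eq_fun do rewrite add0r; rewrite I0 add0r.
Qed.

Definition eps (w : V) : R := (absF lam * nv w + 1)^-1.

Lemma eps_gt0 w : 0 < eps w.
Proof. by rewrite invr_gt0; apply: ltr_wpDl; [apply: mulr_ge0; [apply: absF_ge0|apply: normv_ge0]|apply: ltr01]. Qed.

Lemma chi_near (w x y : V) : nv (y - x) < eps w -> chi (lam * dotv w (y - x)) = 1.
Proof.
move=> h; apply: chi_small; rewrite absFM.
have A0 : 0 <= absF lam * nv w by apply: mulr_ge0; [apply: absF_ge0|apply: normv_ge0].
apply: le_trans (_ : absF lam * (nv w * nv (y - x)) <= 1).
  by rewrite ler_wpM2l ?absF_ge0 ?dotv_le.
rewrite mulrA; apply: le_trans (_ : absF lam * nv w * eps w <= 1).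
  by rewrite ler_wpM2l // ltW.
by rewrite /eps -/(_ / _) ler_pdivrMr ?mul1r ?lerDl //; apply: ltr_wpDl => //; apply: ltr01.
Qed.
Definition G (s : seq V) : V -> R[i] :=
  fun x => if has (fun c => nv (x - c) <= r) s then H x else 0.

Lemma G_sch s : (forall c, c \in s -> U c) -> schwartz_on absF setT (G s).
Proof.
move=> hs; split; last first.
  exists U; split => //; split => // x _ nUx; rewrite /G.
  case: hasP => // -[c cs hc]; exfalso; apply: nUx; exact: hballU (hs c cs) hc.
move=> x _; rewrite /G; case: hasP => [[c cs hc]|hn].
  exists (Num.min r (eps (g c))); split; first by rewrite lt_min hr eps_gt0.
  move=> y; rewrite lt_min => /andP[h1 h2]; split => //.
  have hyc : nv (y - c) <= r by apply: ball_transl h1 hc.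
  case: hasP => [_|[]]; last by exists c.
  rewrite (hloc (hs c cs) hyc) (hloc (hs c cs) hc).
  have -> : y - c = (y - x) + (x - c) by rewrite addrA subrK.
  by rewrite dotvDr mulrDr chiD chi_near // mul1r.
exists r; split => // y hy; split => //.
case: hasP => // -[c cs hc]; exfalso; apply: hn; exists c => //.
by apply: ball_trans hc; rewrite normvB ltW.
Qed.

Lemma G_ball c : U c -> I (G [:: c]) = 0.
Proof.
move=> Uc; have [a [ha ga]] := hgrad Uc.
set k := chi (lam * dotv (g c) a).
have hs1 : forall c', c' \in [:: c] -> U c' by move=> c'; rewrite inE => /eqP ->.
have sch := G_sch hs1.
have E : (fun x => G [:: c] (x + a)) = (fun x => k * G [:: c] x).
  apply: funext => x; rewrite /G /= !orbF.
  have hiff : (nv (x + a - c) <= r) = (nv (x - c) <= r).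
    apply/idP/idP => h.
      have -> : x - c = (x + a - c) + (- a) by rewrite addrAC addrK.
      by apply: le_trans (normvD _ _) _; rewrite ge_max h normvN.
    have -> : x + a - c = (x - c) + a by rewrite addrAC.
    by apply: le_trans (normvD _ _) _; rewrite ge_max h.
  rewrite hiff; case: ifP => h; last by rewrite mulr0.
  rewrite (hloc Uc h) (hloc Uc (_ : nv (x + a - c) <= r)) ?hiff //.
  by rewrite (addrAC x) dotvDr mulrDr chiD /k mulrA mulrC.
have := I_trans a sch; rewrite E IZ // => /eqP.
rewrite -subr_eq0 -{2}(mul1r (I _)) -mulrBl mulf_eq0 => /orP[|/eqP //].
by rewrite subr_eq0 => /eqP hk; exfalso; move: (chi_big ga); rewrite -/k hk eqxx.
Qed.

Lemma G_all s : (forall c, c \in s -> U c) -> I (G s) = 0.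
Proof.
elim: s => [_|c s IH hs].
  have -> : G [::] = fun _ => 0 by apply: funext => x.
  exact: I0.
have hs' : forall c', c' \in s -> U c' by move=> c' h; apply: hs; rewrite inE h orbT.
have Uc : U c by apply: hs; rewrite inE eqxx.
case: (boolP (has (fun c' => nv (c - c') <= r) s)) => [/hasP [c' cs hc]|hn].
  have -> : G (c :: s) = G s; last exact: IH.
  apply: funext => x; rewrite /G /=; case: (boolP (nv (x - c) <= r)) => h //=.
  by case: hasP => // -[]; exists c' => //; apply: ball_trans h hc.
have -> : G (c :: s) = fun x => G [:: c] x + 1 * G s x.
  apply: funext => x; rewrite /G /= orbF mul1r.
  case: (boolP (nv (x - c) <= r)) => h /=.
    case: hasP => [[c' cs hc]|_]; last by rewrite addr0.
    exfalso; move/hasP: hn; apply; exists c' => //.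
    by apply: ball_trans hc; rewrite normvB.
  by case: hasP => _; rewrite add0r.
have hs1 : forall c', c' \in [:: c] -> U c' by move=> c'; rewrite inE => /eqP ->.
rewrite (I_lin (u := G [:: c]) (v := G s)); try exact: G_sch.
by rewrite (G_ball Uc) (IH hs') mulr0 addr0.
Qed.

Lemma cover_aux (O : V -> set V) (s0 : seq V) x :
  (forall i, O i x -> U i /\ nv (x - i) <= r) ->
  (exists2 i, List.In i s0 & O i x) -> has (fun c => nv (x - c) <= r) [seq i <- s0 | `[< U i >]].
Proof.
move=> hO; elim: s0 => [[i []] //|a s0 IH [i /= [ai|ins] Oi]].
  subst i; have [Ua ha] := hO a Oi.
  by rewrite (asboolT Ua) /= ha.
have h : has (fun c => nv (x - c) <= r) [seq i <- s0 | `[< U i >]] by apply: IH; exists i.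
by case: ifP => _ //=; rewrite h orbT.
Qed.

Lemma integral_zero : I (fun x => if `[< U x >] then H x else 0) = 0.
Proof.
pose O := fun i x => U i /\ nv (x - i) <= r.
have hOo : forall i, openV absF (O i).
  move=> i x [Ui hx]; exists r; split => // y hy; split => //.
  exact: ball_transl hy hx.
have [s0 hs0] : exists s0 : seq V, U `<=` (fun x => exists2 i, List.In i s0 & O i x).
  apply: hUc => // x Ux; exists x; split => //; rewrite subrr normv0; exact: ltW.
set s := [seq i <- s0 | `[< U i >]].
have sU : forall c, c \in s -> U c by move=> c; rewrite mem_filter => /andP[/asboolP].
have -> : (fun x => if `[< U x >] then H x else 0) = G s.
  apply: funext => x; rewrite /G; case: asboolP => Ux.
    by rewrite (@cover_aux O s0 x (fun i h => h) (hs0 x Ux)).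
  case: hasP => // -[c cs hc]; exfalso; apply: Ux; exact: hballU (sU c cs) hc.
exact: G_all.
Qed.

End Basic.

Unset Implicit Arguments.

Theorem mainTheorem18 (R : realType) (F : fieldType) (absF : F -> R) (q : nat)
  (hF : nonarch_local_field absF q)
  (chi : F -> R[i]) (hchi : char_ker_oF absF chi)
  (n : nat) (I : ('rV[F]_n -> R[i]) -> R[i]) (hI : haar_integral absF I)
  (U : set 'rV[F]_n) (hUo : openV absF U) (hUc : compactV absF U)
  (f : 'rV[F]_n -> F) (f' : 'rV[F]_n -> 'rV[F]_n)
  (Rm : 'rV[F]_n -> 'rV[F]_n -> {linear 'rV[F]_n -> 'rV[F]_n})
  (htaylor : forall x0 x, U x0 -> U (x0 + x) ->
     f (x0 + x) = f x0 + dotv (f' x0) x + dotv (Rm x0 x x) x)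
  (B : R)
  (hBub : forall x0 x y, U x0 -> U (x0 + x) -> normv absF y = 1 ->
     absF (dotv (Rm x0 x y) y) <= B)
  (hBlub : forall B' : R, (forall x0 x y, U x0 -> U (x0 + x) -> normv absF y = 1 ->
     absF (dotv (Rm x0 x y) y) <= B') -> B <= B')
  (delta : R)
  (hdelta_min : (exists2 x0, U x0 & normv absF (f' x0) = delta) /\
                forall x0, U x0 -> delta <= normv absF (f' x0))
  (hdelta : 0 < delta)
  (phi : 'rV[F]_n -> R[i]) (hphi : schwartz_on absF U phi)
  (m0 : int) (hm0 : ball_decomp absF q U phi m0)
  (hm0min : forall m : int, ball_decomp absF q U phi m -> m0 <= m) :
  forall lam : F, lam != 0 ->
    Num.max ((q%:R : R) * delta ^-2 * B) (delta^-1 * (q%:R : R) ^ m0) < absF lam ->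
    I (fun x => if `[< U x >] then chi (lam * f x) * phi x else 0) = 0.
Proof.
move=> lam lam0; rewrite gt_max => /andP[h1 h2].
set Q := (q%:R : R); set L := absF lam.
have Q0 : 0 < Q := q_gt0 hF.
have L0 : 0 < L := absF_gt0 hF lam0.
have [[x0 Ux0 hx0] hmin] := hdelta_min.
have [j0 hj0] : exists j, delta = absF (f' x0 ord0 j).
  case: (normv_attain absF (f' x0)) => [h|[j hj]]; last by exists j; rewrite -hx0.
  by move: hdelta; rewrite -hx0 h ltxx.
have Ld0 : 0 < L * delta by rewrite mulr_gt0.
have hz : Q ^ m0 * Q <= L * delta.
  rewrite hj0 /L -(absFM hF); apply: (absF_disc hF); rewrite (absFM hF) -hj0.
  by move: h2; rewrite ltr_pdivrMl // mulrC.
pose r := Q * (L * delta)^-1.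
have hr : 0 < r by rewrite mulr_gt0 // invr_gt0.
have rle : r <= Q ^ (- m0).
  by rewrite -invr_expz /r ler_pdivrMr // ler_pdivlMl ?exprz_gt0.
have [s0 [hs0 [_ hs0c]]] := hm0.
have hball : forall c x, U c -> normv absF (x - c) <= r -> U x /\ phi x = phi c.
  move=> c x Uc hxc; have [c0 c0s hc0] := (hs0 c).1 Uc.
  have hx0' : normv absF (x - c0) <= Q ^ (- m0) by exact: (ball_trans hF (le_trans hxc rle) hc0).
  split; first by apply/(hs0 x); exists c0.
  exact: hs0c hx0' hc0.
have hR : forall c x, U c -> normv absF (x - c) <= r ->
    absF (lam * dotv (Rm c (x - c) (x - c)) (x - c)) <= 1.
  move=> c x Uc hxc.
  have Ucx : U (c + (x - c)) by rewrite addrC subrK; exact: (hball c x Uc hxc).1.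
  have zero_case : normv absF (x - c) = 0 -> absF (lam * dotv (Rm c (x - c) (x - c)) (x - c)) <= 1.
    by move/(normv_eq0 hF) => ->; rewrite dotv0r mulr0 (absF0 hF) ler01.
  case: (normv_attain absF (x - c)) => [|[j hj]]; first exact: zero_case.
  set c0 := (x - c) ord0 j in hj.
  have [c00|c0n] := eqVneq c0 0; first by apply: zero_case; rewrite hj c00 (absF0 hF).
  pose y := c0^-1 *: (x - c).
  have hv : x - c = c0 *: y by rewrite /y scalerA divff // scale1r.
  have ny : normv absF y = 1 by rewrite /y (normvZ hF) hj (absFV hF) mulVf // gt_eqF ?(absF_gt0 hF).
  have hB := hBub _ _ _ Uc Ucx ny.
  have B0 : 0 <= B := le_trans (absF_ge0 hF _) hB.
  apply: (absF_lt_q hF).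
  rewrite {2 3}hv linearZ dotvZl dotvZr !(absFM hF) -/L.
  have hc0r : absF c0 <= r by rewrite -hj.
  have ac0 : 0 <= absF c0 := absF_ge0 hF c0.
  apply: le_lt_trans (_ : L * (r * (r * B)) < Q).
    apply: ler_wpM2l; first exact: ltW.
    have ad := absF_ge0 hF (dotv (Rm c (x - c) y) y).
    apply: ler_pM => //; first exact: mulr_ge0.
    by apply: ler_pM.
  have -> : L * (r * (r * B)) = Q * ((Q * delta ^-2 * B) / L).
    rewrite /r; field; rewrite ?lt0r_neq0 //.
  by rewrite gtr_pMr // ltr_pdivrMr // mul1r.
have hloc : forall c x, U c -> normv absF (x - c) <= r ->
    chi (lam * f x) * phi x = chi (lam * f c) * phi c * chi (lam * dotv (f' c) (x - c)).
  move=> c x Uc hxc; have [Ux phix] := hball c x Uc hxc.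
  have hx : c + (x - c) = x by rewrite addrC subrK.
  have Ucx : U (c + (x - c)) by rewrite hx.
  have := htaylor _ _ Uc Ucx; rewrite hx => ->.
  rewrite !mulrDr !(chiD hchi) (chi_small hchi (hR c x Uc hxc)) mulr1 phix.
  by rewrite mulrAC.
have hgrad : forall c, U c -> exists a, normv absF a <= r /\ 1 < absF (lam * dotv (f' c) a).
  move=> c Uc; have hdc := hmin c Uc.
  have [j hj] : exists j, normv absF (f' c) = absF (f' c ord0 j).
    case: (normv_attain absF (f' c)) => [h|[j hj]]; last by exists j.
    by move: hdelta; rewrite ltNge (le_trans hdc) // h.
  have [pi hpi] : exists pi : F, absF pi = Q^-1 by case: hF => _ [_ [_ [_ [_ [h _]]]]].
  have pi0 : pi != 0 by apply/eqP => p0; move: hpi; rewrite p0 (absF0 hF) => /eqP; rewrite eq_sym invr_eq0 gt_eqF.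
  set w := lam * f' c ord0 j.
  have aw : absF w = L * normv absF (f' c) by rewrite /w (absFM hF) hj.
  have w0 : w != 0.
    apply/eqP => w0; move: aw; rewrite w0 (absF0 hF) => /eqP; rewrite eq_sym mulf_eq0 => /orP[];
      [by rewrite gt_eqF | by move=> /eqP h; move: hdelta; rewrite ltNge (le_trans hdc) // h].
  exists ((w * pi)^-1 *: delta_mx ord0 j); split.
    rewrite (normvZ hF); apply: le_trans (_ : absF (w * pi)^-1 * 1 <= r).
      apply: ler_wpM2l; first exact: (absF_ge0 hF).
      apply: normv_le => // k; rewrite mxE; case: (_ && _) => /=; rewrite ?(absF0 hF) ?(absF1 hF) //.
    rewrite mulr1 (absFV hF) (absFM hF) hpi aw invfM invrK mulrC /r.
    apply: ler_wpM2l; first exact: ltW.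
    rewrite -[X in X <= _]mul1r ler_pdivrMr ?mulr_gt0 ?(lt_le_trans hdelta hdc) //.
    by rewrite ler_pdivlMl // mulr1 ler_wpM2l // ltW.
  rewrite dotvZr dotv_delta.
  have -> : lam * ((w * pi)^-1 * f' c ord0 j) = pi^-1.
    by rewrite mulrCA -/w invfM mulrAC mulVf ?mul1r.
  rewrite (absFV hF) hpi invrK.
  exact: (q_gt1 hF).
apply: (integral_zero (g := f') (H := fun x => chi (lam * f x) * phi x) (r := r) hF hchi hI hUc hr).
- by move=> c x Uc hxc; case: (hball c x Uc hxc).
- exact: hloc.
- exact: hgrad.
Qed.
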